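(* Let $(X,\delta_X)$ be a multi-retraceable represented space. Then there is a total representation $\delta:2^\mathbb{N}\to X$ (i.e. a surjective map defined on all of Cantor space $2^\mathbb{N}\subseteq\mathbb{N}^\mathbb{N}$) such that $\delta\equiv\delta_X$. In particular, $X$ is compact with respect to the final topology of $\delta_X$.
   Context: A represented space $(X,\delta_X)$ is a set $X$ with a surjective partial map $\delta_X:\subseteq\mathbb{N}^\mathbb{N}\to X$; it carries the final topology induced by $\delta_X$. For representations $\delta_1,\delta_2$ of the same set, $\delta_1\le\delta_2$ means $\delta_1=\delta_2F$ for some computable partial $F:\subseteq\mathbb{N}^\mathbb{N}\to\mathbb{N}^\mathbb{N}$, and $\equiv$ is the induced equivalence. For $p\in\mathbb{N}^\mathbb{N}$, $p-1$ is the concatenation of $p(0)-1,p(1)-1,\dots$ with $0-1$ read as the empty word. The completion $\overline X=X\cup\{\bot\}$ has the total representation $\delta_{\overline X}(p)=\delta_X(p-1)$ if $p-1$ is an infinite sequence in $\mathrm{dom}(\delta_X)$ and $\delta_{\overline X}(p)=\bot$ otherwise. $X$ is multi-retraceable if there is a computable multi-valued map $r:\overline X\rightrightarrows X$ with $r(x)=\{x\}$ for $x\in X$ (computable meaning it has a computable realizer $F$ with $\delta_X F(p)\in r(\delta_{\overline X}(p))$ for all $p$). *)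

(* Defs.v *)
From Stdlib Require Import Arith List.
Import ListNotations.

Definition pair (a b : nat) : nat := (a + b) * (a + b + 1) / 2 + b.

(** Inverse of [pair]: enumerates (0,0),(1,0),(0,1),(2,0),(1,1),(0,2),... *)
Fixpoint unpair (n : nat) : nat * nat :=
  match n with
  | 0 => (0, 0)
  | S n' => let (a, b) := unpair n' in
            match a with
            | 0 => (S b, 0)
            | S a' => (a', S b)
            end
  end.

Fixpoint code_list (l : list nat) : nat :=
  match l with
  | [] => 0
  | x :: l' => S (pair x (code_list l'))
  end.

Inductive rcode : Type :=
| RZero : rcode
| RSucc : rcode
| RFst : rcode
| RSnd : rcode
| RPair : rcode -> rcode -> rcode
| RComp : rcode -> rcode -> rcode
| RRec : rcode -> rcode -> rcode
| RMu : rcode -> rcode.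

Inductive eval : rcode -> nat -> nat -> Prop :=
| ev_zero x : eval RZero x 0
| ev_succ x : eval RSucc x (S x)
| ev_fst x : eval RFst x (fst (unpair x))
| ev_snd x : eval RSnd x (snd (unpair x))
| ev_pair f g x a b : eval f x a -> eval g x b -> eval (RPair f g) x (pair a b)
| ev_comp f g x y z : eval g x y -> eval f y z -> eval (RComp f g) x z
| ev_rec0 f g a y : eval f a y -> eval (RRec f g) (pair a 0) y
| ev_recS f g a n y z : eval (RRec f g) (pair a n) y ->
    eval g (pair a (pair n y)) z -> eval (RRec f g) (pair a (S n)) z
| ev_mu f x n : eval f (pair x n) 0 ->
    (forall j, j < n -> exists v, eval f (pair x j) (S v)) ->
    eval (RMu f) x n.

Definition Baire := nat -> nat.

Definition prefix (p : Baire) (k : nat) : list nat := map p (seq 0 k).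

Definition Cantor (p : Baire) : Prop := forall n, p n <= 1.

(** A code [M] computes a partial map on Baire space: to produce output digit
    [n] on input [p], it examines successively the prefixes of [p] of length
    k = 0,1,2,...; [M (pair (code of p|k) n) = 0] means "no answer yet",
    [= S m] means "output digit n is m".  *)
Definition mach_out (M : rcode) (p : Baire) (n m : nat) : Prop :=
  exists k, eval M (pair (code_list (prefix p k)) n) (S m) /\
    forall j, j < k -> eval M (pair (code_list (prefix p j)) n) 0.

Definition mach_comp (M : rcode) (p q : Baire) : Prop :=
  forall n, mach_out M p n (q n).

(** * Represented spaces: a partial surjection Baire ~> X, given as a
    single-valued relation. *)
Record rep (X : Type) : Type := {
  rep_rel :> Baire -> X -> Prop;
  rep_functional : forall p x y, rep_rel p x -> rep_rel p y -> x = y;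
  rep_surj : forall x, exists p, rep_rel p x
}.
Arguments rep_rel {X} _ _ _.

Definition rdom {X : Type} (d : Baire -> X -> Prop) (p : Baire) : Prop :=
  exists x, d p x.

Definition rep_le {X : Type} (d1 d2 : Baire -> X -> Prop) : Prop :=
  exists M : rcode, forall p x, d1 p x ->
    exists q, mach_comp M p q /\ d2 q x.

Definition rep_equiv {X : Type} (d1 d2 : Baire -> X -> Prop) : Prop :=
  rep_le d1 d2 /\ rep_le d2 d1.

(** * Completion.  [minus1 p q]: p-1 is the infinite sequence q, i.e. the
    nonzero entries of p occur at positions f 0 < f 1 < ... (infinitely many)
    and q i = p (f i) - 1. *)
Definition minus1 (p q : Baire) : Prop :=
  exists f : nat -> nat,
    (forall i, f i < f (S i)) /\
    (forall n, p n <> 0 <-> exists i, f i = n) /\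
    (forall i, q i = p (f i) - 1).

(** Representation of the completion X ∪ {⊥}, with ⊥ = None. *)
Definition compl_rel {X : Type} (d : Baire -> X -> Prop) (p : Baire)
  (x : option X) : Prop :=
  match x with
  | Some x => exists q, minus1 p q /\ d q x
  | None => ~ (exists q x, minus1 p q /\ d q x)
  end.

Definition multi_retraceable {X : Type} (d : rep X) : Prop :=
  exists r : option X -> X -> Prop,
    (forall x y, r (Some x) y <-> y = x) /\
    exists M : rcode, forall p (xb : option X), compl_rel d p xb ->
      exists q y, mach_comp M p q /\ d q y /\ r xb y.

Definition final_open {X : Type} (d : Baire -> X -> Prop) (U : X -> Prop) : Prop :=
  forall p x, d p x -> U x ->
    exists k, forall q y, d q y -> (forall i, i < k -> q i = p i) -> U y.

Definition final_compact {X : Type} (d : Baire -> X -> Prop) : Prop :=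
  forall (I : Type) (U : I -> X -> Prop),
    (forall i, final_open d (U i)) -> (forall x, exists i, U i x) ->
    exists l : list I, forall x, exists i, In i l /\ U i x.

(* Main.v *)
Require Import Defs.
From Stdlib Require Import Arith List Lia Classical ClassicalEpsilon FunctionalExtensionality.
Import ListNotations.

Definition T (s : nat) := s * (s + 1) / 2.
Lemma T_S s : T (S s) = T s + S s.
Proof. unfold T. replace (S s * (S s + 1)) with (s*(s+1) + S s * 2) by nia.
  now rewrite Nat.div_add by lia. Qed.
Lemma T_ge s : s <= T s.
Proof. induction s. unfold T; simpl; lia. rewrite T_S; lia. Qed.
Lemma pair_T a b : pair a b = T (a+b) + b.
Proof. reflexivity. Qed.
Lemma pair_ge a b : a + b + b <= pair a b.
Proof. rewrite pair_T. pose proof (T_ge (a+b)). lia. Qed.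
Lemma pair_S1 b : pair (S b) 0 = S (pair 0 b).
Proof. rewrite !pair_T. replace (S b + 0) with (S b) by lia. simpl. rewrite T_S. lia. Qed.
Lemma pair_S2 a b : pair a (S b) = S (pair (S a) b).
Proof. rewrite !pair_T. replace (a + S b) with (S a + b) by lia. lia. Qed.

Lemma unpair_pair_gen n : forall a b, pair a b = n -> unpair n = (a,b).
Proof.
  induction n; intros a b H.
  - pose proof (pair_ge a b). assert (a = 0 /\ b = 0) as [-> ->] by lia. reflexivity.
  - destruct b as [|b].
    + destruct a as [|a]. { pose proof (pair_ge 0 0). unfold pair in H. simpl in H. discriminate. }
      rewrite pair_S1 in H. injection H as H. simpl. rewrite (IHn 0 a H). reflexivity.
    + rewrite pair_S2 in H. injection H as H. simpl. rewrite (IHn (S a) b H). reflexivity.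
Qed.
Lemma unpair_pair a b : unpair (pair a b) = (a,b).
Proof. now apply unpair_pair_gen. Qed.
Lemma up1 a b : fst (unpair (pair a b)) = a.
Proof. now rewrite unpair_pair. Qed.
Lemma up2 a b : snd (unpair (pair a b)) = b.
Proof. now rewrite unpair_pair. Qed.
Lemma pair_unpair n : pair (fst (unpair n)) (snd (unpair n)) = n.
Proof.
  induction n. reflexivity.
  simpl. destruct (unpair n) as [a b] eqn:E. simpl in IHn.
  destruct a as [|a]; simpl.
  - rewrite pair_S1. now rewrite IHn.
  - rewrite pair_S2. now rewrite IHn.
Qed.
Lemma pair_inj a b c d : pair a b = pair c d -> a = c /\ b = d.
Proof. intro H. pose proof (unpair_pair a b). rewrite H, unpair_pair in H0.
  injection H0; auto. Qed.

Fixpoint eval_det c x y (H : eval c x y) {struct H} : forall y', eval c x y' -> y = y'.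
Proof.
  destruct H; intros y' H'.
  - inversion H'; reflexivity.
  - inversion H'; reflexivity.
  - inversion H'; reflexivity.
  - inversion H'; reflexivity.
  - inversion H'; subst.
    match goal with H1 : eval f x ?u, H2 : eval g x ?v |- _ =>
      rewrite (eval_det _ _ _ H _ H1), (eval_det _ _ _ H0 _ H2) end. reflexivity.
  - inversion H'; subst.
    match goal with H1 : eval g x ?u |- _ => pose proof (eval_det _ _ _ H _ H1); subst end.
    match goal with H1 : eval f _ y' |- _ => exact (eval_det _ _ _ H0 _ H1) end.
  - inversion H'; subst.
    + match goal with E : pair _ _ = pair _ _ |- _ => apply pair_inj in E as [<- _] end.
      match goal with H1 : eval f _ y' |- _ => exact (eval_det _ _ _ H _ H1) end.
    + match goal with E : pair _ _ = pair _ _ |- _ => apply pair_inj in E as [_ Hc]; discriminate end.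
  - inversion H'; subst.
    + match goal with E : pair _ _ = pair _ _ |- _ => apply pair_inj in E as [_ Hc]; discriminate end.
    + match goal with E : pair _ _ = pair _ _ |- _ => apply pair_inj in E as [<- Hn]; injection Hn as <- end.
      match goal with H1 : eval (RRec f g) _ ?u |- _ => pose proof (eval_det _ _ _ H _ H1); subst end.
      match goal with H1 : eval g _ y' |- _ => exact (eval_det _ _ _ H0 _ H1) end.
  - inversion H'; subst.
    rename H into Hz. rename H0 into Hlt.
    match goal with H1 : eval f (pair x y') 0 |- _ => rename H1 into Hz' end.
    match goal with H1 : forall j, j < y' -> _ |- _ => rename H1 into Hlt' end.
    destruct (Nat.lt_trichotomy n y') as [Hl|[He|Hl]].
    + destruct (Hlt' n Hl) as [v Hv]. pose proof (eval_det _ _ _ Hz _ Hv). discriminate.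
    + exact He.
    + destruct (Hlt y' Hl) as [v Hv]. pose proof (eval_det _ _ _ Hv _ Hz'). discriminate.
Qed.

Definition computes (c : rcode) (f : nat -> nat) := forall x, eval c x (f x).
Lemma c_ext c f g : computes c f -> (forall x, f x = g x) -> computes c g.
Proof. intros H E x. rewrite <- E. apply H. Qed.
Lemma c_zero : computes RZero (fun _ => 0). Proof. intro; constructor. Qed.
Lemma c_succ : computes RSucc S. Proof. intro; constructor. Qed.
Lemma c_fst : computes RFst (fun x => fst (unpair x)). Proof. intro; constructor. Qed.
Lemma c_snd : computes RSnd (fun x => snd (unpair x)). Proof. intro; constructor. Qed.
Lemma c_pair a b A B : computes a A -> computes b B -> computes (RPair a b) (fun x => pair (A x) (B x)).
Proof. intros HA HB x. constructor; auto. Qed.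
Lemma c_comp a b A B : computes a A -> computes b B -> computes (RComp a b) (fun x => A (B x)).
Proof. intros HA HB x. econstructor; eauto. Qed.

Fixpoint recf (F G : nat -> nat) (a n : nat) : nat :=
  match n with 0 => F a | S n => G (pair a (pair n (recf F G a n))) end.
Lemma c_rec cf cg F G : computes cf F -> computes cg G ->
  forall a n, eval (RRec cf cg) (pair a n) (recf F G a n).
Proof. intros HF HG a n. induction n; simpl. apply ev_rec0; auto. eapply ev_recS; eauto. Qed.

Definition Id := RPair RFst RSnd.
Lemma c_id : computes Id (fun x => x).
Proof. eapply c_ext. apply c_pair; [apply c_fst|apply c_snd]. apply pair_unpair. Qed.

Fixpoint K (k : nat) : rcode := match k with 0 => RZero | S k => RComp RSucc (K k) end.
Lemma c_K k : computes (K k) (fun _ => k).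
Proof. induction k; simpl. apply c_zero. eapply c_ext. apply c_comp. apply c_succ. apply IHk. reflexivity. Qed.

Definition Loop (cI cS cN : rcode) : rcode :=
  RComp (RRec cI (RComp cS (RComp RSnd RSnd))) (RPair Id cN).
Lemma c_loop cI cS cN I St N : computes cI I -> computes cS St -> computes cN N ->
  computes (Loop cI cS cN) (fun x => Nat.iter (N x) St (I x)).
Proof.
  intros HI HS HN x. econstructor. apply c_pair. apply c_id. apply HN.
  assert (E : forall n, recf I (fun y => St (snd (unpair (snd (unpair y))))) x n = Nat.iter n St (I x)).
  { induction n; simpl; auto. rewrite !up2. now rewrite IHn. }
  rewrite <- E. apply c_rec. auto. eapply c_ext. apply c_comp. apply HS. apply c_comp; [apply c_snd|apply c_snd]. reflexivity.
Qed.

Definition Cond (cx cA cB : rcode) : rcode :=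
  RComp (RRec RFst (RComp RSnd RFst)) (RPair (RPair cA cB) cx).
Lemma c_cond cx cA cB X A B : computes cx X -> computes cA A -> computes cB B ->
  computes (Cond cx cA cB) (fun x => match X x with 0 => A x | S _ => B x end).
Proof.
  intros HX HA HB x. econstructor. apply c_pair. apply c_pair; eauto. eauto.
  assert (E: recf (fun y => fst (unpair y)) (fun y => snd (unpair (fst (unpair y)))) (pair (A x) (B x)) (X x)
     = match X x with 0 => A x | S _ => B x end).
  { destruct (X x); simpl; repeat rewrite ?up1, ?up2; reflexivity. }
  rewrite <- E. apply c_rec. apply c_fst. eapply c_ext. apply c_comp. apply c_snd. apply c_fst. reflexivity.
Qed.

Definition Pred := RComp (RRec RZero (RComp RFst RSnd)) (RPair RZero Id).
Lemma c_pred : computes Pred Nat.pred.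
Proof.
  intro x. econstructor. apply c_pair. apply c_zero. apply c_id.
  assert (E: recf (fun _ => 0) (fun y => fst (unpair (snd (unpair y)))) 0 x = Nat.pred x).
  { destruct x; simpl; repeat rewrite ?up1, ?up2; reflexivity. }
  rewrite <- E. apply c_rec. apply c_zero. eapply c_ext. apply c_comp. apply c_fst. apply c_snd. reflexivity.
Qed.

Definition Sub := Loop RFst Pred RSnd.
Lemma iter_pred n a : Nat.iter n Nat.pred a = a - n.
Proof. induction n; simpl. lia. rewrite IHn. lia. Qed.
Lemma c_sub : computes Sub (fun x => fst (unpair x) - snd (unpair x)).
Proof. eapply c_ext. apply c_loop. apply c_fst. apply c_pred. apply c_snd. intro; apply iter_pred. Qed.

Definition Sub2 a b := RComp Sub (RPair a b).
Lemma c_sub2 a b A B : computes a A -> computes b B -> computes (Sub2 a b) (fun x => A x - B x).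
Proof. intros. eapply c_ext. apply c_comp. apply c_sub. apply c_pair; eauto. intro; simpl; now rewrite up1, up2. Qed.

Definition Eqb a b := Cond (Sub2 a b) (Cond (Sub2 b a) (K 1) (K 0)) (K 0).
Lemma c_eqb a b A B : computes a A -> computes b B ->
  computes (Eqb a b) (fun x => if A x =? B x then 1 else 0).
Proof.
  intros. eapply c_ext. apply c_cond. apply c_sub2; eauto. apply c_cond. apply c_sub2; eauto.
  apply c_K. apply c_K. apply c_K.
  intro x. cbv beta. destruct (A x - B x) eqn:E1; [destruct (B x - A x) eqn:E2|].
  - replace (A x) with (B x) by lia. now rewrite Nat.eqb_refl.
  - destruct (A x =? B x) eqn:E; auto. apply Nat.eqb_eq in E. lia.
  - destruct (A x =? B x) eqn:E; auto. apply Nat.eqb_eq in E. lia.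
Qed.

Definition Head := RComp RFst Pred.
Definition Tail := RComp RSnd Pred.
Definition hd' c := fst (unpair (Nat.pred c)).
Definition tl' c := snd (unpair (Nat.pred c)).
Lemma c_head : computes Head hd'. Proof. eapply c_ext. apply c_comp. apply c_fst. apply c_pred. reflexivity. Qed.
Lemma c_tail : computes Tail tl'. Proof. eapply c_ext. apply c_comp. apply c_snd. apply c_pred. reflexivity. Qed.
Definition Cons a b := RComp RSucc (RPair a b).
Lemma c_cons a b A B : computes a A -> computes b B -> computes (Cons a b) (fun x => S (pair (A x) (B x))).
Proof. intros. apply c_comp. apply c_succ. apply c_pair; auto. Qed.

Lemma code_ge l : length l <= code_list l.
Proof. induction l; simpl. lia. pose proof (pair_ge a (code_list l)). lia. Qed.

Definition StepC cst := Cond RFst Id (RPair (RComp Tail RFst) (RComp cst (RPair RSnd (RComp Head RFst)))).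
Definition Fold cst := RComp RSnd (Loop Id (StepC cst) RFst).
Definition stepF (SF : nat -> nat) y := match fst (unpair y) with 0 => y | S _ =>
      pair (tl' (fst (unpair y))) (SF (pair (snd (unpair y)) (hd' (fst (unpair y))))) end.
Definition foldF SF x := snd (unpair (Nat.iter (fst (unpair x)) (stepF SF) x)).
Lemma c_fold cst SF : computes cst SF -> computes (Fold cst) (foldF SF).
Proof.
  intros H.
  assert (HS : computes (StepC cst) (stepF SF)).
  { apply c_cond. apply c_fst. apply c_id. apply c_pair. apply c_comp. apply c_tail. apply c_fst.
    apply c_comp. auto. apply c_pair. apply c_snd. apply c_comp. apply c_head. apply c_fst. }
  exact (c_comp _ _ _ _ c_snd (c_loop _ _ _ _ _ _ c_id HS c_fst)).
Qed.
Lemma foldF_val SF l acc : foldF SF (pair (code_list l) acc) = fold_left (fun a y => SF (pair a y)) l acc.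
Proof.
  assert (Hfix : forall k acc, Nat.iter k (stepF SF) (pair 0 acc) = pair 0 acc).
  { induction k; intros; simpl; auto. rewrite IHk. unfold stepF. now rewrite up1. }
  assert (Hit : forall l k acc, length l <= k ->
     Nat.iter k (stepF SF) (pair (code_list l) acc) = pair 0 (fold_left (fun a y => SF (pair a y)) l acc)).
  { clear l acc. intro l; induction l; intros k acc' Hk; simpl. apply Hfix.
    destruct k as [|k]; simpl in Hk. lia.
    rewrite Nat.iter_succ_r. unfold stepF at 2. rewrite up1, up2.
    unfold tl', hd'. simpl. rewrite up1, up2. apply IHl. lia. }
  unfold foldF. rewrite up1, Hit, up2. reflexivity. apply code_ge.
Qed.

Definition hfun i x := match x with 0 => 0 | S _ => S (fst (unpair i)) end.
Definition gfun (p : Baire) : Baire := fun n => hfun n (p n).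
Fixpoint mapi (i : nat) (l : list nat) : list nat :=
  match l with [] => [] | x :: l => hfun i x :: mapi (S i) l end.

Definition GSF z := pair (S (fst (unpair (fst (unpair z)))))
   (S (pair (hfun (fst (unpair (fst (unpair z)))) (snd (unpair z))) (snd (unpair (fst (unpair z)))))).
Definition Hc := Cond RSnd (K 0) (RComp RSucc (RComp RFst (RComp RFst RFst))).
Definition GSt := RPair (RComp RSucc (RComp RFst RFst)) (Cons Hc (RComp RSnd RFst)).
Lemma c_GSt : computes GSt GSF.
Proof.
  eapply c_ext. apply c_pair. apply c_comp. apply c_succ. apply c_comp; [apply c_fst|apply c_fst].
  apply c_cons. apply c_cond. apply c_snd. apply c_K. apply c_comp. apply c_succ.
  apply c_comp. apply c_fst. apply c_comp; [apply c_fst|apply c_fst].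
  apply c_comp; [apply c_snd|apply c_fst].
  intro z. unfold GSF, hfun. cbv beta. destruct (snd (unpair z)); reflexivity.
Qed.
Definition RevSF z := S (pair (snd (unpair z)) (fst (unpair z))).
Definition RevSt := Cons RSnd RFst.
Lemma c_RevSt : computes RevSt RevSF.
Proof. apply c_cons; [apply c_snd|apply c_fst]. Qed.

Definition Gmap := RComp RSnd (RComp (Fold GSt) (RPair Id (K (pair 0 0)))).
Definition Gc := RComp (Fold RevSt) (RPair Gmap (K 0)).
Definition Gf x := foldF RevSF (pair (snd (unpair (foldF GSF (pair x (pair 0 0))))) 0).
Lemma c_G : computes Gc Gf.
Proof.
  eapply c_ext. apply c_comp. apply c_fold, c_RevSt. apply c_pair.
  apply c_comp. apply c_snd. apply c_comp. apply c_fold, c_GSt. apply c_pair. apply c_id. apply c_K. apply c_K.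
  reflexivity.
Qed.

Lemma fold_GSF l i r : fold_left (fun a y => GSF (pair a y)) l (pair i (code_list r))
   = pair (i + length l) (code_list (rev (mapi i l) ++ r)).
Proof.
  revert i r. induction l; intros i r; simpl. now rewrite Nat.add_0_r.
  unfold GSF at 2. rewrite !up1, !up2. change (S (pair (hfun i a) (code_list r))) with (code_list (hfun i a :: r)).
  rewrite IHl. rewrite <- app_assoc. simpl. f_equal. lia.
Qed.
Lemma fold_Rev l r : fold_left (fun a y => RevSF (pair a y)) l (code_list r) = code_list (rev l ++ r).
Proof.
  revert r. induction l; intros r; simpl. reflexivity.
  unfold RevSF at 2. rewrite up1, up2. change (S (pair a (code_list r))) with (code_list (a :: r)).
  rewrite IHl. now rewrite <- app_assoc.
Qed.
Lemma Gf_val l : Gf (code_list l) = code_list (mapi 0 l).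
Proof.
  unfold Gf. rewrite foldF_val. change (pair 0 0) with (pair 0 (code_list [])).
  rewrite fold_GSF, up2, app_nil_r. change 0 with (code_list []) at 2. rewrite foldF_val, fold_Rev.
  now rewrite rev_involutive, app_nil_r.
Qed.
Lemma mapi_prefix p j i : mapi i (map p (seq i j)) = map (gfun p) (seq i j).
Proof. revert i. induction j; intros i; simpl; auto. now rewrite IHj. Qed.
Lemma Gf_prefix p j : Gf (code_list (prefix p j)) = code_list (prefix (gfun p) j).
Proof. unfold prefix. now rewrite Gf_val, mapi_prefix. Qed.

(* encoding Baire -> Cantor *)
Fixpoint tt (q : Baire) (j : nat) : nat :=
  match j with 0 => 0 | S j => S (pair (q j) (tt q j)) end.
Definition sq q j := pair (q j) (tt q j).
Definition e (q : Baire) (n : nat) : nat :=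
  if existsb (fun i => sq q i =? n) (seq 0 (S n)) then 1 else 0.

Definition b2n (b : bool) := if b then 1 else 0.
Definition NSF z :=
  let acc := fst (unpair z) in let x := snd (unpair z) in
  let n := fst (unpair acc) in let idx := fst (unpair (snd (unpair acc))) in
  let t := fst (unpair (snd (unpair (snd (unpair acc))))) in
  let f := snd (unpair (snd (unpair (snd (unpair acc))))) in
  pair n (pair (S idx) (pair (S (pair x t)) (match f with 0 => b2n (pair x t =? n) | S _ => 1 end))).
Definition nC := RComp RFst RFst.
Definition idxC := RComp RFst (RComp RSnd RFst).
Definition tC := RComp RFst (RComp RSnd (RComp RSnd RFst)).
Definition fC := RComp RSnd (RComp RSnd (RComp RSnd RFst)).
Definition sC := RPair RSnd tC.
Definition NSt := RPair nC (RPair (RComp RSucc idxC) (RPair (RComp RSucc sC) (Cond fC (Eqb sC nC) (K 1)))).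
Lemma c_NSt : computes NSt NSF.
Proof.
  eapply c_ext.
  repeat first [apply c_eqb | apply c_pair | apply c_cond | apply c_K | apply c_fst | apply c_snd | apply c_succ | apply c_comp].
  intro z. unfold NSF. cbv beta zeta. destruct (snd (unpair (snd (unpair (snd (unpair (fst (unpair z)))))))); reflexivity.
Qed.
Definition NFold := RComp (Fold NSt) (RPair RFst (RPair RSnd (K (pair 0 (pair 0 0))))).
Definition Nc := Cond (Sub2 (RComp RFst (RComp RSnd NFold)) RSnd) (K 0)
                      (RComp RSucc (RComp RSnd (RComp RSnd (RComp RSnd NFold)))).
Definition NFf x := foldF NSF (pair (fst (unpair x)) (pair (snd (unpair x)) (pair 0 (pair 0 0)))).
Definition Nf x := match fst (unpair (snd (unpair (NFf x)))) - snd (unpair x) with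
  0 => 0 | S _ => S (snd (unpair (snd (unpair (snd (unpair (NFf x))))))) end.
Lemma c_N : computes Nc Nf.
Proof.
  assert (HF : computes NFold NFf).
  { eapply c_ext. apply c_comp. apply c_fold, c_NSt. repeat first [apply c_pair | apply c_K | apply c_fst | apply c_snd].
    reflexivity. }
  eapply c_ext. apply c_cond. apply c_sub2. apply c_comp. apply c_fst. apply c_comp. apply c_snd. apply HF.
  apply c_snd. apply c_K. apply c_comp. apply c_succ. apply c_comp. apply c_snd. apply c_comp. apply c_snd.
  apply c_comp. apply c_snd. apply HF. reflexivity.
Qed.

Lemma prefix_S p k : prefix p (S k) = prefix p k ++ [p k].
Proof. unfold prefix. now rewrite seq_S, map_app. Qed.
Lemma length_prefix p k : length (prefix p k) = k.
Proof. unfold prefix. now rewrite length_map, length_seq. Qed.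

Lemma NFold_val q n j : NFf (pair (code_list (prefix q j)) n) =
  pair n (pair j (pair (tt q j) (b2n (existsb (fun i => sq q i =? n) (seq 0 j))))).
Proof.
  unfold NFf. rewrite up1, up2, foldF_val. induction j. reflexivity.
  rewrite prefix_S, fold_left_app, IHj. cbn [fold_left]. unfold NSF. repeat rewrite ?up1, ?up2.
  rewrite seq_S, existsb_app. simpl. unfold sq.
  destruct (existsb (fun i => pair (q i) (tt q i) =? n) (seq 0 j)); simpl; auto.
  now rewrite Bool.orb_false_r.
Qed.

Lemma Nf_val q n j : Nf (pair (code_list (prefix q j)) n) =
  if j - n =? 0 then 0 else S (b2n (existsb (fun i => sq q i =? n) (seq 0 j))).
Proof.
  unfold Nf. rewrite NFold_val. repeat rewrite ?up1, ?up2. destruct (j - n); reflexivity.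
Qed.

Lemma mach_out_det M p n m m' : mach_out M p n m -> mach_out M p n m' -> m = m'.
Proof.
  intros [k [Hk Hj]] [k' [Hk' Hj']].
  destruct (Nat.lt_trichotomy k k') as [H|[->|H]].
  - specialize (Hj' _ H). pose proof (eval_det _ _ _ Hk _ Hj'). discriminate.
  - pose proof (eval_det _ _ _ Hk _ Hk'). congruence.
  - specialize (Hj _ H). pose proof (eval_det _ _ _ Hk' _ Hj). discriminate.
Qed.
Lemma mach_comp_det M p q q' : mach_comp M p q -> mach_comp M p q' -> q = q'.
Proof. intros H H'. apply functional_extensionality. intro n. eapply mach_out_det; eauto. Qed.

Definition Mp (M : rcode) := RComp M (RPair (RComp Gc RFst) RSnd).
Lemma evMp M p k n v : eval M (pair (code_list (prefix (gfun p) k)) n) v ->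
  eval (Mp M) (pair (code_list (prefix p k)) n) v.
Proof.
  intro H. econstructor. apply c_pair. apply c_comp. apply c_G. apply c_fst. apply c_snd.
  cbv beta. rewrite up1, up2, Gf_prefix. exact H.
Qed.
Lemma comp_Mp M p q : mach_comp M (gfun p) q -> mach_comp (Mp M) p q.
Proof.
  intros H n. destruct (H n) as [k [Hk Hj]]. exists k. split. now apply evMp.
  intros j Hjk. apply evMp. auto.
Qed.

Lemma N_comp q : mach_comp Nc q (e q).
Proof.
  intro n. exists (S n). split.
  - pose proof (c_N (pair (code_list (prefix q (S n))) n)) as H. rewrite Nf_val in H.
    replace (S n - n =? 0) with false in H by (symmetry; apply Nat.eqb_neq; lia).
    unfold e. destruct existsb; exact H.
  - intros j Hj. pose proof (c_N (pair (code_list (prefix q j)) n)) as H. rewrite Nf_val in H.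
    replace (j - n =? 0) with true in H by (symmetry; apply Nat.eqb_eq; lia). exact H.
Qed.

Lemma tt_ge q i : i <= tt q i.
Proof. induction i; simpl. lia. pose proof (pair_ge (q i) (tt q i)). lia. Qed.
Lemma sq_ge q i : i <= sq q i.
Proof. unfold sq. pose proof (pair_ge (q i) (tt q i)). pose proof (tt_ge q i). lia. Qed.
Lemma e_iff q n : e q n <> 0 <-> exists i, sq q i = n.
Proof.
  unfold e. destruct existsb eqn:E; split; intro H.
  - apply existsb_exists in E as [i [_ Hi]]. apply Nat.eqb_eq in Hi. eauto.
  - discriminate.
  - contradiction.
  - exfalso. destruct H as [i Hi]. pose proof (sq_ge q i).
    assert (existsb (fun i => sq q i =? n) (seq 0 (S n)) = true).
    { apply existsb_exists. exists i. split. apply in_seq. lia. now apply Nat.eqb_eq. }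
    congruence.
Qed.
Lemma e_Cantor q : Cantor (e q).
Proof. intro n. unfold e. destruct existsb; lia. Qed.
Lemma minus1_e q : minus1 (gfun (e q)) q.
Proof.
  exists (sq q). split; [|split].
  - intro i. unfold sq. simpl. pose proof (pair_ge (q (S i)) (S (pair (q i) (tt q i)))). lia.
  - intro n. rewrite <- e_iff. unfold gfun, hfun. destruct (e q n); split; congruence.
  - intro i. unfold gfun, hfun. destruct (e q (sq q i)) eqn:E.
    + exfalso. assert (e q (sq q i) <> 0) by (apply e_iff; eauto). congruence.
    + unfold sq. rewrite up1. lia.
Qed.

Lemma prefix_agree p p' k : prefix p' k = prefix p k -> forall i, i < k -> p' i = p i.
Proof.
  intros H i Hi. assert (nth i (prefix p' k) 0 = nth i (prefix p k) 0) by now rewrite H.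
  unfold prefix in H0. rewrite !(nth_indep _ 0 (p' 0)) in H0 by (rewrite length_map, length_seq; lia).
  rewrite map_nth in H0. rewrite (nth_indep _ (p' 0) (p 0)) in H0 by (rewrite length_map, length_seq; lia).
  rewrite map_nth, seq_nth in H0 by lia. exact H0.
Qed.
Lemma agree_prefix p p' j : (forall i, i < j -> p' i = p i) -> prefix p' j = prefix p j.
Proof. intro H. unfold prefix. apply map_ext_in. intros a Ha. apply in_seq in Ha. apply H. lia. Qed.

Lemma continuity M p q : mach_comp M p q -> forall KK, exists k, forall p' q',
  (forall i, i < k -> p' i = p i) -> mach_comp M p' q' -> forall n, n < KK -> q' n = q n.
Proof.
  intros H KK. induction KK.
  - exists 0. intros. lia.
  - destruct IHKK as [k Hk]. destruct (H KK) as [kK [HK HKj]].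
    exists (Nat.max k kK). intros p' q' Ha Hc n Hn.
    destruct (Nat.eq_dec n KK) as [->|Hne].
    + apply (mach_out_det M p' KK). apply Hc. exists kK. split.
      * rewrite (agree_prefix p p'). exact HK. intros; apply Ha; lia.
      * intros j Hj. rewrite (agree_prefix p p'). auto. intros; apply Ha; lia.
    + apply (Hk p'); auto. intros; apply Ha; lia. lia.
Qed.

Section Fan.
Variable good : list nat -> Prop.
Hypothesis split_good : forall s, good (s ++ [0]) -> good (s ++ [1]) -> good s.
Fixpoint path (n : nat) : list nat :=
  match n with 0 => [] | S n => let s := path n in
    if excluded_middle_informative (good (s ++ [0])) then s ++ [1] else s ++ [0] end.
Lemma path_inv n : ~ good [] -> ~ good (path n) /\ length (path n) = n /\
   exists b, b <= 1 /\ path (S n) = path n ++ [b].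
Proof.
  intro H0. induction n.
  - simpl. split; auto. split; auto. destruct excluded_middle_informative; eexists; split; [|reflexivity| |reflexivity]; lia.
  - destruct IHn as [Hg [Hl [b [Hb Hp]]]]. rewrite Hp.
    assert (Hg' : ~ good (path n ++ [b])).
    { simpl in Hp. destruct excluded_middle_informative as [G|G]; apply app_inv_head in Hp; injection Hp as <-.
      - intro G1. apply Hg. now apply split_good. - exact G. }
    split; auto. split. rewrite length_app; simpl; lia.
    cbn [path]. rewrite <- Hp. destruct excluded_middle_informative; eexists; split; [|reflexivity| |reflexivity]; lia.
Qed.
End Fan.

Lemma fan (good : list nat -> Prop) :
  (forall s, good (s ++ [0]) -> good (s ++ [1]) -> good s) ->
  (forall p, Cantor p -> exists k, good (prefix p k)) -> good [].
Proof.
  intros Hs Hbar. apply NNPP. intro H0.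
  set (pp := fun n => nth n (path good (S n)) 0).
  assert (Hpp : forall n, path good (S n) = path good n ++ [pp n] /\ pp n <= 1).
  { intro n. destruct (path_inv good Hs n H0) as [_ [Hl [b [Hb Hp]]]].
    unfold pp. rewrite Hp. rewrite app_nth2 by lia. rewrite Hl, Nat.sub_diag. simpl. auto. }
  assert (Hpre : forall k, prefix pp k = path good k).
  { induction k. reflexivity. rewrite prefix_S, IHk. symmetry. apply Hpp. }
  destruct (Hbar pp) as [k Hk]. intro n. apply Hpp.
  rewrite Hpre in Hk. destruct (path_inv good Hs k H0) as [Hg _]. auto.
Qed.

Theorem proposition2p8 (X : Type) (dX : rep X) :
  multi_retraceable dX ->
  (exists delta : Baire -> X -> Prop,
      (forall p x y, delta p x -> delta p y -> x = y) /\
      (forall p, Cantor p <-> exists x, delta p x) /\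
      (forall x, exists p, delta p x) /\
      rep_equiv delta dX) /\
  final_compact dX.
Proof.
  intros [r [Hr [M HM]]].
  set (delta := fun p x => Cantor p /\ exists q, mach_comp (Mp M) p q /\ dX q x).
  assert (Hfun : forall p x y, delta p x -> delta p y -> x = y).
  { intros p x y [_ [q [Hq Hx]]] [_ [q' [Hq' Hy]]].
    pose proof (mach_comp_det _ _ _ _ Hq Hq'); subst. eapply rep_functional; eauto. }
  assert (Htot : forall p, Cantor p -> exists x, delta p x).
  { intros p Hp.
    assert (exists xb, compl_rel dX (gfun p) xb) as [xb Hxb].
    { destruct (classic (exists q x, minus1 (gfun p) q /\ dX q x)) as [[q [x Hqx]]|Hn].
      - exists (Some x). simpl. eauto.
      - exists None. exact Hn. }
    destruct (HM _ _ Hxb) as [q [y [Hq [Hy _]]]].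
    exists y. split; auto. exists q. split; auto. now apply comp_Mp. }
  assert (Henc : forall q x, dX q x -> delta (e q) x).
  { intros q x Hqx.
    assert (Hc : compl_rel dX (gfun (e q)) (Some x)) by (exists q; split; auto; apply minus1_e).
    destruct (HM _ _ Hc) as [q' [y [Hq' [Hy Hry]]]].
    apply Hr in Hry. subst y. split. apply e_Cantor. exists q'. split; auto. now apply comp_Mp. }
  assert (Hsurj : forall x, exists p, delta p x).
  { intro x. destruct (rep_surj _ dX x) as [q Hq]. eauto. }
  split.
  - exists delta. split; [exact Hfun|]. split.
    + intro p. split. apply Htot. intros [x [Hp _]]. exact Hp.
    + split; [exact Hsurj|]. split.
      * exists (Mp M). intros p x [_ [q [Hq Hx]]]. eauto.
      * exists Nc. intros q x Hqx. exists (e q). split. apply N_comp. auto.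
  - intros I U Hopen Hcov.
    set (good := fun s : list nat => exists l : list I, forall p, Cantor p -> prefix p (length s) = s ->
       forall y, delta p y -> exists i, In i l /\ U i y).
    assert (Hg : good []).
    { apply fan.
      - intros s [l0 H0] [l1 H1]. exists (l0 ++ l1). intros p Hp Hpre y Hy.
        assert (Hb : p (length s) <= 1) by apply Hp.
        assert (Hps : prefix p (length (s ++ [p (length s)])) = s ++ [p (length s)]).
        { rewrite length_app. simpl. rewrite Nat.add_1_r, prefix_S, Hpre. reflexivity. }
        destruct (p (length s)) as [|[|b]] eqn:Eb; [| |lia].
        + destruct (H0 p Hp Hps y Hy) as [i [Hi HU]]. exists i. split; auto. apply in_or_app; auto.
        + destruct (H1 p Hp Hps y Hy) as [i [Hi HU]]. exists i. split; auto. apply in_or_app; auto.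
      - intros p Hp. destruct (Htot p Hp) as [x [_ [q [Hq Hx]]]].
        destruct (Hcov x) as [i Hi].
        destruct (Hopen i q x Hx Hi) as [K HK].
        destruct (continuity _ _ _ Hq K) as [k Hk].
        exists k. exists [i]. intros p' Hp' Hpre y [_ [q' [Hq' Hy]]].
        rewrite length_prefix in Hpre.
        exists i. split. now left. apply (HK q' y Hy).
        intros n Hn. apply (Hk p' q'); auto. apply prefix_agree. exact Hpre. }
    destruct Hg as [l Hl]. exists l. intro x. destruct (Hsurj x) as [p Hp].
    apply (Hl p); auto. apply Hp.
Qed.
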